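(* Let $1\le i\le n-1$ and $m\ge1$ be an integer, with the convention that $X^{(k)}=0$ for $k<0$. Then in ${\boldsymbol U}_{v}(\mathfrak q_n)$ (in fact in ${\boldsymbol U}_{v,\mathcal Z}$): \begin{align*} (1)\ &\mathsf E_{\bar i}\mathsf F_i^{(m)}=\mathsf F_i^{(m)}\mathsf E_{\bar i}-v^{1-m}\mathsf F_i^{(m-1)}\mathsf K_i\mathsf K_{\overline{i+1}}+v^{m-1}\mathsf F_i^{(m-1)}\mathsf K_{\bar i}\mathsf K_{i+1}-\mathsf F_i^{(m-2)}\mathsf K_i\mathsf K_{i+1}\mathsf F_{\bar i};\\ (2)\ &\mathsf E_i^{(m)}\mathsf F_{\bar i}=\mathsf F_{\bar i}\mathsf E_i^{(m)}+v^{m-1}\mathsf E_i^{(m-1)}\mathsf K_{\bar i}\mathsf K_{i+1}^{-1}-v^{-m+1}\mathsf E_i^{(m-1)}\mathsf K_{\overline{i+1}}\mathsf K_i^{-1}+\mathsf E_i^{(m-2)}\mathsf E_{\bar i}\mathsf K_{i+1}^{-1}\mathsf K_i^{-1};\\ (3)\ &\mathsf E_{\bar i}\mathsf E_{i+1}^{(m)}=v^m\mathsf E_{i+1}^{(m)}\mathsf E_{\bar i}+\mathsf E_{i+1}^{(m-1)}(\mathsf E_i\mathsf E_{\overline{i+1}}-v\mathsf E_{\overline{i+1}}\mathsf E_i)\quad(\text{here } i\le n-2). \end{align*}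
   Context: Let $v$ be an indeterminate. The quantum queer superalgebra ${\boldsymbol U}_{v}(\mathfrak q_n)$ is the associative superalgebra over $\mathbb Q(v)$ generated by even generators $\mathsf K_i,\mathsf K_i^{-1}$ ($1\le i\le n$), $\mathsf E_j,\mathsf F_j$ ($1\le j\le n-1$) and odd generators $\mathsf K_{\bar i}$ ($1\le i\le n$), $\mathsf E_{\bar j},\mathsf F_{\bar j}$ ($1\le j\le n-1$), subject to the following relations (indices are taken only where they make sense), where $(\epsilon_i,\alpha_j)=\delta_{i,j}-\delta_{i,j+1}$: (QQ1) $\mathsf K_i\mathsf K_i^{-1}=\mathsf K_i^{-1}\mathsf K_i=1$, $\mathsf K_i\mathsf K_j=\mathsf K_j\mathsf K_i$, $\mathsf K_i\mathsf K_{\bar j}=\mathsf K_{\bar j}\mathsf K_i$, $\mathsf K_{\bar i}\mathsf K_{\bar j}+\mathsf K_{\bar j}\mathsf K_{\bar i}=2\delta_{i,j}\frac{\mathsf K_i^2-\mathsf K_i^{-2}}{v^2-v^{-2}}$. (QQ2) $\mathsf K_i\mathsf E_j=v^{(\epsilon_i,\alpha_j)}\mathsf E_j\mathsf K_i$, $\mathsf K_i\mathsf E_{\bar j}=v^{(\epsilon_i,\alpha_j)}\mathsf E_{\bar j}\mathsf K_i$, $\mathsf K_i\mathsf F_j=v^{-(\epsilon_i,\alpha_j)}\mathsf F_j\mathsf K_i$, $\mathsf K_i\mathsf F_{\bar j}=v^{-(\epsilon_i,\alpha_j)}\mathsf F_{\bar j}\mathsf K_i$. (QQ3) $\mathsf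 K_{\bar i}\mathsf E_i-v\mathsf E_i\mathsf K_{\bar i}=\mathsf E_{\bar i}\mathsf K_i^{-1}$, $v\mathsf K_{\bar i}\mathsf E_{i-1}-\mathsf E_{i-1}\mathsf K_{\bar i}=-\mathsf K_i^{-1}\mathsf E_{\overline{i-1}}$, $\mathsf K_{\bar i}\mathsf F_i-v\mathsf F_i\mathsf K_{\bar i}=-\mathsf F_{\bar i}\mathsf K_i$, $v\mathsf K_{\bar i}\mathsf F_{i-1}-\mathsf F_{i-1}\mathsf K_{\bar i}=\mathsf K_i\mathsf F_{\overline{i-1}}$, $\mathsf K_{\bar i}\mathsf E_{\bar i}+v\mathsf E_{\bar i}\mathsf K_{\bar i}=\mathsf E_i\mathsf K_i^{-1}$, $v\mathsf K_{\bar i}\mathsf E_{\overline{i-1}}+\mathsf E_{\overline{i-1}}\mathsf K_{\bar i}=\mathsf K_i^{-1}\mathsf E_{i-1}$, $\mathsf K_{\bar i}\mathsf F_{\bar i}+v\mathsf F_{\bar i}\mathsf K_{\bar i}=\mathsf F_i\mathsf K_i$, $v\mathsf K_{\bar i}\mathsf F_{\overline{i-1}}+\mathsf F_{\overline{i-1}}\mathsf K_{\bar i}=\mathsf K_i\mathsf F_{i-1}$, and for $j\ne i,i-1$: $\mathsf K_{\bar i}\mathsf E_j=\mathsf E_j\mathsf K_{\bar i}$, $\mathsf K_{\bar i}\mathsf F_j=\mathsf F_j\mathsf K_{\bar i}$, $\mathsf K_{\bar i}\mathsf E_{\bar j}=-\mathsf E_{\bar j}\mathsf K_{\bar i}$,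 $\mathsf K_{\bar i}\mathsf F_{\bar j}=-\mathsf F_{\bar j}\mathsf K_{\bar i}$. (QQ4) $\mathsf E_i\mathsf F_j-\mathsf F_j\mathsf E_i=\delta_{i,j}\frac{\mathsf K_i\mathsf K_{i+1}^{-1}-\mathsf K_i^{-1}\mathsf K_{i+1}}{v-v^{-1}}$, $\mathsf E_{\bar i}\mathsf F_{\bar j}+\mathsf F_{\bar j}\mathsf E_{\bar i}=\delta_{i,j}\big(\frac{\mathsf K_i\mathsf K_{i+1}-\mathsf K_i^{-1}\mathsf K_{i+1}^{-1}}{v-v^{-1}}+(v-v^{-1})\mathsf K_{\bar i}\mathsf K_{\overline{i+1}}\big)$, $\mathsf E_i\mathsf F_{\bar j}-\mathsf F_{\bar j}\mathsf E_i=\delta_{i,j}(\mathsf K_{i+1}^{-1}\mathsf K_{\bar i}-\mathsf K_{\overline{i+1}}\mathsf K_i^{-1})$, $\mathsf E_{\bar i}\mathsf F_j-\mathsf F_j\mathsf E_{\bar i}=\delta_{i,j}(\mathsf K_{i+1}\mathsf K_{\bar i}-\mathsf K_{\overline{i+1}}\mathsf K_i)$. (QQ5) $\mathsf E_{\bar i}^2=-\frac{v-v^{-1}}{v+v^{-1}}\mathsf E_i^2$, $\mathsf F_{\bar i}^2=\frac{v-v^{-1}}{v+v^{-1}}\mathsf F_i^2$; for $|i-j|\ne1$: $\mathsf E_i\mathsf E_{\bar j}=\mathsf E_{\bar j}\mathsf E_i$, $\mathsf F_i\mathsf F_{\bar j}=\mathsf F_{\bar j}\mathsf F_i$; for $|i-j|>1$: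 $\mathsf E_i\mathsf E_j=\mathsf E_j\mathsf E_i$, $\mathsf F_i\mathsf F_j=\mathsf F_j\mathsf F_i$, $\mathsf E_{\bar i}\mathsf E_{\bar j}=-\mathsf E_{\bar j}\mathsf E_{\bar i}$, $\mathsf F_{\bar i}\mathsf F_{\bar j}=-\mathsf F_{\bar j}\mathsf F_{\bar i}$; $\mathsf E_i\mathsf E_{i+1}-v\mathsf E_{i+1}\mathsf E_i=\mathsf E_{\bar i}\mathsf E_{\overline{i+1}}+v\mathsf E_{\overline{i+1}}\mathsf E_{\bar i}$, $\mathsf E_i\mathsf E_{\overline{i+1}}-v\mathsf E_{\overline{i+1}}\mathsf E_i=\mathsf E_{\bar i}\mathsf E_{i+1}-v\mathsf E_{i+1}\mathsf E_{\bar i}$, $\mathsf F_i\mathsf F_{i+1}-v\mathsf F_{i+1}\mathsf F_i=-(\mathsf F_{\bar i}\mathsf F_{\overline{i+1}}+v\mathsf F_{\overline{i+1}}\mathsf F_{\bar i})$, $\mathsf F_i\mathsf F_{\overline{i+1}}-v\mathsf F_{\overline{i+1}}\mathsf F_i=\mathsf F_{\bar i}\mathsf F_{i+1}-v\mathsf F_{i+1}\mathsf F_{\bar i}$. (QQ6) for $|i-j|=1$: $\mathsf E_i^2X-(v+v^{-1})\mathsf E_iX\mathsf E_i+X\mathsf E_i^2=0$ for $X\in\{\mathsf E_j,\mathsf E_{\bar j}\}$ and $\mathsf F_i^2Y-(v+v^{-1})\mathsf F_iY\mathsf F_i+Y\mathsf F_i^2=0$ for $Y\in\{\mathsf F_j,\mathsf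 F_{\bar j}\}$. Notation: $[m]_v=\frac{v^m-v^{-m}}{v-v^{-1}}$, $[m]_v^!=[m]_v[m-1]_v\cdots[1]_v$, $[0]_v^!=1$, and $X^{(m)}=X^m/[m]_v^!$ for $m\ge0$. ${\boldsymbol U}_{v,\mathcal Z}$ denotes the $\mathbb Z[v,v^{-1}]$-subsuperalgebra of ${\boldsymbol U}_{v}(\mathfrak q_n)$ generated by $\mathsf K_i^{\pm1}$, $\prod_{s=1}^t\frac{\mathsf K_iv^{1-s}-\mathsf K_i^{-1}v^{s-1}}{v^s-v^{-s}}$, $\mathsf K_{\bar i}$, $\mathsf E_j^{(m)},\mathsf F_j^{(m)},\mathsf E_{\bar j},\mathsf F_{\bar j}$. *)

(* Defs.v *)
From HB Require Import structures.
From mathcomp Require Import all_boot all_order all_algebra.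
From mathcomp Require Import fraction.
Set Implicit Arguments. Unset Strict Implicit. Unset Printing Implicit Defensive.
Import Order.TTheory GRing.Theory Num.Theory.
Local Open Scope ring_scope.

Definition Qv : fieldType := {fraction {poly rat}}.
Definition v : Qv := @FracField.tofrac _ ('X : {poly rat}).

Definition qint (m : nat) : Qv := (v ^+ m - v ^- m) / (v - v^-1).
Definition qfact (m : nat) : Qv := \prod_(1 <= k < m.+1) qint k.

Definition dpow (A : algType Qv) (x : A) (k : int) : A :=
  match k with
  | Posz n => (qfact n)^-1 *: x ^+ n
  | Negz _ => 0
  end.

(* (eps_i, alpha_j) = delta_{i,j} - delta_{i,j+1} *)
Definition epsal (i j : nat) : int := (i == j)%:Z - (i == j.+1)%:Z.

(* The defining relations (QQ1)-(QQ6) of U_v(q_n), for a family of elements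
   of an associative Q(v)-algebra A.  Indices are natural numbers:
   K_i, K_i^{-1} (= Km i), K_{bar i} (= Kb i) for 1 <= i <= n;
   E_j, F_j, E_{bar j} (= Eb j), F_{bar j} (= Fb j) for 1 <= j <= n-1. *)
Definition qq_rels (n : nat) (A : algType Qv)
  (Kp Km Kb E F Eb Fb : nat -> A) : Prop :=
  (forall i j, (1 <= i <= n)%N -> (1 <= j <= n)%N ->
     [/\ Kp i * Km i = 1, Km i * Kp i = 1, Kp i * Kp j = Kp j * Kp i,
         Kp i * Kb j = Kb j * Kp i &
         Kb i * Kb j + Kb j * Kb i =
           if i == j then (2 / (v ^+ 2 - v ^- 2)) *: (Kp i ^+ 2 - Km i ^+ 2)
           else 0]) /\
  (forall i j, (1 <= i <= n)%N -> (1 <= j <= n.-1)%N ->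
     [/\ Kp i * E j = v ^ (epsal i j) *: (E j * Kp i),
         Kp i * Eb j = v ^ (epsal i j) *: (Eb j * Kp i),
         Kp i * F j = v ^ (- epsal i j) *: (F j * Kp i) &
         Kp i * Fb j = v ^ (- epsal i j) *: (Fb j * Kp i)]) /\
  (forall i, (1 <= i <= n.-1)%N ->
     [/\ Kb i * E i - v *: (E i * Kb i) = Eb i * Km i,
         Kb i * F i - v *: (F i * Kb i) = - (Fb i * Kp i),
         Kb i * Eb i + v *: (Eb i * Kb i) = E i * Km i &
         Kb i * Fb i + v *: (Fb i * Kb i) = F i * Kp i]) /\
  (forall i, (2 <= i <= n)%N ->
     [/\ v *: (Kb i * E i.-1) - E i.-1 * Kb i = - (Km i * Eb i.-1),
         v *: (Kb i * F i.-1) - F i.-1 * Kb i = Kp i * Fb i.-1,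
         v *: (Kb i * Eb i.-1) + Eb i.-1 * Kb i = Km i * E i.-1 &
         v *: (Kb i * Fb i.-1) + Fb i.-1 * Kb i = Kp i * F i.-1]) /\
  (forall i j, (1 <= i <= n)%N -> (1 <= j <= n.-1)%N ->
     j != i -> j != i.-1 ->
     [/\ Kb i * E j = E j * Kb i, Kb i * F j = F j * Kb i,
         Kb i * Eb j = - (Eb j * Kb i) & Kb i * Fb j = - (Fb j * Kb i)]) /\
  (forall i j, (1 <= i <= n.-1)%N -> (1 <= j <= n.-1)%N ->
     [/\ E i * F j - F j * E i =
           (if i == j then (v - v^-1)^-1 *: (Kp i * Km i.+1 - Km i * Kp i.+1)
            else 0),
         Eb i * Fb j + Fb j * Eb i =
           (if i == j then (v - v^-1)^-1 *: (Kp i * Kp i.+1 - Km i * Km i.+1)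
                           + (v - v^-1) *: (Kb i * Kb i.+1)
            else 0),
         E i * Fb j - Fb j * E i =
           (if i == j then Km i.+1 * Kb i - Kb i.+1 * Km i else 0) &
         Eb i * F j - F j * Eb i =
           (if i == j then Kp i.+1 * Kb i - Kb i.+1 * Kp i else 0)]) /\
  (forall i, (1 <= i <= n.-1)%N ->
     Eb i ^+ 2 = - ((v - v^-1) / (v + v^-1)) *: E i ^+ 2 /\
     Fb i ^+ 2 = ((v - v^-1) / (v + v^-1)) *: F i ^+ 2) /\
  (forall i j, (1 <= i <= n.-1)%N -> (1 <= j <= n.-1)%N ->
     ~~ ((i == j.+1) || (j == i.+1)) ->
     E i * Eb j = Eb j * E i /\ F i * Fb j = Fb j * F i) /\
  (forall i j, (1 <= i <= n.-1)%N -> (1 <= j <= n.-1)%N ->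
     (i.+1 < j)%N || (j.+1 < i)%N ->
     [/\ E i * E j = E j * E i, F i * F j = F j * F i,
         Eb i * Eb j = - (Eb j * Eb i) & Fb i * Fb j = - (Fb j * Fb i)]) /\
  (forall i, (1 <= i)%N -> (i.+1 <= n.-1)%N ->
     [/\ E i * E i.+1 - v *: (E i.+1 * E i) = Eb i * Eb i.+1 + v *: (Eb i.+1 * Eb i),
         E i * Eb i.+1 - v *: (Eb i.+1 * E i) = Eb i * E i.+1 - v *: (E i.+1 * Eb i),
         F i * F i.+1 - v *: (F i.+1 * F i) = - (Fb i * Fb i.+1 + v *: (Fb i.+1 * Fb i)) &
         F i * Fb i.+1 - v *: (Fb i.+1 * F i) = Fb i * F i.+1 - v *: (F i.+1 * Fb i)]) /\
  (forall i j, (1 <= i <= n.-1)%N -> (1 <= j <= n.-1)%N ->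
     (i == j.+1) || (j == i.+1) ->
     (forall X, X = E j \/ X = Eb j ->
        E i ^+ 2 * X - (v + v^-1) *: (E i * X * E i) + X * E i ^+ 2 = 0) /\
     (forall Y, Y = F j \/ Y = Fb j ->
        F i ^+ 2 * Y - (v + v^-1) *: (F i * Y * F i) + Y * F i ^+ 2 = 0)).

(* Main.v *)
Require Import Defs.
From HB Require Import structures.
From mathcomp Require Import all_boot all_order all_algebra.
From mathcomp Require Import fraction.
From mathcomp Require Import ring zify.
Set Implicit Arguments. Unset Strict Implicit. Unset Printing Implicit Defensive.
Import Order.TTheory GRing.Theory Num.Theory.
Local Open Scope ring_scope.

Section Scal.
Variables (F : fieldType) (x : F).
Hypothesis x0 : x != 0.
Hypothesis xn1 : forall j, (0 < j)%N -> x ^+ j != 1.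
Definition q m := (x ^+ m - x ^- m) / (x - x^-1).

Lemma xx1 : x * x - 1 != 0.
Proof. by rewrite subr_eq0 -expr2 xn1. Qed.

Lemma dx0 : x - x^-1 != 0.
Proof.
apply/negP => /eqP H; move: xx1; rewrite subr_eq0.
by move/eqP: H; rewrite subr_eq add0r => /eqP {1}->; rewrite mulVf ?eqxx.
Qed.

Lemma q_al k : x ^+ k.+1 * q k.+2 = x ^+ 2 * (x ^+ k * q k.+1) + 1.
Proof.
rewrite /q !exprS expr0 mulr1; have w0 : x ^+ k != 0 by rewrite expf_neq0.
move: (x ^+ k) w0 => w w0; have := xx1; have := dx0 => d0 e0.
field; by rewrite x0 w0 e0.
Qed.

Lemma q_be k : x ^- k.+1 * q k.+2 = x ^- 2 * (x ^- k * q k.+1) + 1.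
Proof.
rewrite /q !exprS expr0 mulr1; have w0 : x ^+ k != 0 by rewrite expf_neq0.
move: (x ^+ k) w0 => w w0; have := xx1; have := dx0 => d0 e0.
field; by rewrite x0 w0 e0.
Qed.

Lemma q_ga k : q k.+2 * q k.+1 =
  q k.+1 * q k + x * (x ^+ k * q k.+1) + x^-1 * (x ^- k * q k.+1).
Proof.
rewrite /q !exprS; have w0 : x ^+ k != 0 by rewrite expf_neq0.
move: (x ^+ k) w0 => w w0; have := xx1; have := dx0 => d0 e0.
field; by rewrite x0 w0 e0.
Qed.

Lemma q0 : q 0 = 0.
Proof. by rewrite /q expr0 invr1 subrr mul0r. Qed.

Lemma q_rec3 k : q k.+2 = x ^+ k.+1 + x^-1 * q k.+1.
Proof.
rewrite /q !exprS; have w0 : x ^+ k != 0 by rewrite expf_neq0.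
move: (x ^+ k) w0 => w w0; have := xx1; have := dx0 => d0 e0.
field; by rewrite x0 w0 e0.
Qed.

Lemma q_neq0 k : q k.+1 != 0.
Proof.
rewrite /q mulf_neq0 ?invr_eq0 ?dx0 //.
apply/negP => /eqP H; have := xn1 (isT : (0 < k.+1 + k.+1)%N).
rewrite exprD; move/eqP: H; rewrite subr_eq add0r => /eqP {1}->.
by rewrite mulVf ?eqxx // expf_neq0.
Qed.

Lemma xpx : x * x + 1 != 0.
Proof.
apply/negP => /eqP H; have := xn1 (isT : (0 < 4)%N).
have -> : x ^+ 4 = (x * x) * (x * x) by rewrite !exprS expr0 mulr1 !mulrA.
move/eqP: H; rewrite addr_eq0 => /eqP ->.
by rewrite mulrNN mulr1 eqxx.
Qed.

Lemma c_mul : (x - x^-1) / (x + x^-1) * (x + x^-1) = x - x^-1.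
Proof.
rewrite mulfVK //; apply/negP => /eqP H.
have := xn1 (isT : (0 < 4)%N).
have -> : x ^+ 4 = (x * x) * (x * x) by rewrite !exprS expr0 mulr1 !mulrA.
move/eqP: H; rewrite addr_eq0 => /eqP H.
have -> : x * x = -1 by rewrite {2}H mulrN mulfV.
by rewrite mulrNN mulr1 eqxx.
Qed.

Lemma v48 : x ^- 2 * x ^- 2 - x ^+ 2 * x ^+ 2 != 0.
Proof.
apply/negP => /eqP H; have := xn1 (isT : (0 < 8)%N).
have y0 : x ^+ 2 != 0 by rewrite expf_neq0.
move/eqP: H; rewrite subr_eq0 => /eqP H.
have -> : x ^+ 8 = (x^+2 * x^+2) * (x^+2 * x^+2) by rewrite -!exprD.
by rewrite -{1}H -invfM mulVf ?eqxx // mulf_neq0.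
Qed.

Lemma v22 : x ^+ 2 - x ^- 2 != 0.
Proof.
apply/negP => /eqP H; have := xn1 (isT : (0 < 4)%N).
have y0 : x ^+ 2 != 0 by rewrite expf_neq0.
move/eqP: H; rewrite subr_eq0 => /eqP H.
have -> : x ^+ 4 = x^+2 * x^+2 by rewrite -!exprD.
by rewrite {2}H mulfV ?eqxx.
Qed.
End Scal.

Lemma v_neq0 : v != 0.
Proof. by rewrite /v tofrac_eq0 polyX_eq0. Qed.

Lemma vX_neq1 k : (0 < k)%N -> v ^+ k != 1.
Proof.
move=> k0; rewrite /v -tofracXn -tofrac1 tofrac_eq.
apply/eqP => /(congr1 (size : {poly rat} -> nat)).
by rewrite size_polyXn size_poly1; case: k k0.
Qed.

Lemma two_neq0 : (2 : Qv) != 0.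
Proof.
have -> : (2 : Qv) = FracField.tofrac (2%:R : {poly rat}) by rewrite rmorph_nat.
by rewrite tofrac_eq0 -polyC_natr polyC_eq0.
Qed.

Definition al k := v ^+ k * qint k.+1.
Definition be k := v ^- k * qint k.+1.
Definition ga k := qint k.+1 * qint k.

Lemma al_rec k : al k.+1 = v ^+ 2 * al k + 1.
Proof. exact: (q_al v_neq0 vX_neq1). Qed.
Lemma be_rec k : be k.+1 = v ^- 2 * be k + 1.
Proof. exact: (q_be v_neq0 vX_neq1). Qed.
Lemma ga_rec k : ga k.+1 = ga k + v * al k + v^-1 * be k.
Proof. exact: (q_ga v_neq0 vX_neq1). Qed.
Lemma qint0 : qint 0 = 0.
Proof. exact: (q0 v). Qed.
Lemma qint_rec3 k : qint k.+2 = v ^+ k.+1 + v^-1 * qint k.+1.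
Proof. exact: (q_rec3 v_neq0 vX_neq1). Qed.
Lemma qint_neq0 k : qint k.+1 != 0.
Proof. exact: (q_neq0 v_neq0 vX_neq1). Qed.
Lemma cmul : (v - v^-1) / (v + v^-1) * (v + v^-1) = v - v^-1.
Proof. exact: (c_mul v_neq0 vX_neq1). Qed.
Lemma qint1 : qint 1 = 1.
Proof. by rewrite /qint expr1 mulfV ?(dx0 v_neq0 vX_neq1). Qed.
Lemma qfact_rec k : qfact k.+1 = qint k.+1 * qfact k.
Proof. by rewrite /qfact big_nat_recr //= mulrC. Qed.
Lemma qfact_neq0 k : qfact k != 0.
Proof.
elim: k => [|k IH]; first by rewrite /qfact big_geq //; exact: oner_neq0.
by rewrite qfact_rec mulf_neq0 ?qint_neq0.
Qed.
Lemma ia k : (k.+1%:Z - 1) = k%:Z. Proof. lia. Qed.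
Lemma ib k : (1 - k.+1%:Z) = - k%:Z. Proof. lia. Qed.
Lemma ic k : (- k.+1%:Z + 1) = - k%:Z. Proof. lia. Qed.
Lemma id0 : (1%:Z - 2) = Negz 0. Proof. by []. Qed.
Lemma id1 j : (j.+2%:Z - 2) = j%:Z. Proof. lia. Qed.
Lemma vv1 : v * v + 1 != 0. Proof. exact: (xpx vX_neq1). Qed.
Lemma vv2 : v * v - 1 != 0. Proof. exact: (xx1 vX_neq1). Qed.
Ltac vfield := move: v_neq0 vv1 vv2; generalize v; generalize Qv;
  let K := fresh "K" in let x := fresh "x" in let h1 := fresh "h" in let h2 := fresh "h" in let h3 := fresh "h" in
  intros K x h1 h2 h3; field; rewrite ?h1 ?h2 ?h3 //.
Ltac gf := move: v_neq0 vv1 vv2; generalize v; generalize Qv; intros; field;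
  repeat (apply/andP; split); try assumption.
Lemma qfact0 : qfact 0 = 1. Proof. by rewrite /qfact big_geq. Qed.
Lemma qfact1 : qfact 1 = 1. Proof. by rewrite qfact_rec qint1 qfact0 mulr1. Qed.
Lemma dpowP (B : algType Qv) (x : B) k : dpow x (Posz k) = (qfact k)^-1 *: x ^+ k.
Proof. by []. Qed.
Lemma dpowN (B : algType Qv) (x : B) k : dpow x (Negz k) = 0.
Proof. by []. Qed.
Lemma v48Q : v ^- 2 * v ^- 2 - v ^+ 2 * v ^+ 2 != 0.
Proof. exact: (v48 v_neq0 vX_neq1). Qed.
Lemma v22Q : v ^+ 2 - v ^- 2 != 0.
Proof. exact: (v22 v_neq0 vX_neq1). Qed.

Section LC.
Variables (K : fieldType) (V : lmodType K) (M1 M2 M3 M4 M5 M6 : V).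
Definition L6 (a b c d e f : K) := a *: M1 + b *: M2 + c *: M3 + d *: M4 + e *: M5 + f *: M6.
Lemma L6D a b c d e f a' b' c' d' e' f' :
  L6 a b c d e f + L6 a' b' c' d' e' f' = L6 (a+a') (b+b') (c+c') (d+d') (e+e') (f+f').
Proof.
by rewrite /L6 !scalerDl; do 5 (rewrite addrACA; congr (_ + _)).
Qed.
Lemma L6N a b c d e f : - L6 a b c d e f = L6 (-a) (-b) (-c) (-d) (-e) (-f).
Proof. by rewrite /L6 !scaleNr !opprD. Qed.
Lemma L6Z k a b c d e f : k *: L6 a b c d e f = L6 (k*a) (k*b) (k*c) (k*d) (k*e) (k*f).
Proof. by rewrite /L6 !scalerDr !scalerA. Qed.
Lemma L6_0 : 0 = L6 0 0 0 0 0 0. Proof. by rewrite /L6 !scale0r !add0r. Qed.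
End LC.

Lemma L6_all (K : fieldType) (V : lmodType K) (P : V -> V -> V -> V -> V -> V -> Prop) M1 M2 M3 M4 M5 M6 :
  P (L6 M1 M2 M3 M4 M5 M6 1 0 0 0 0 0) (L6 M1 M2 M3 M4 M5 M6 0 1 0 0 0 0)
    (L6 M1 M2 M3 M4 M5 M6 0 0 1 0 0 0) (L6 M1 M2 M3 M4 M5 M6 0 0 0 1 0 0)
    (L6 M1 M2 M3 M4 M5 M6 0 0 0 0 1 0) (L6 M1 M2 M3 M4 M5 M6 0 0 0 0 0 1) ->
  P M1 M2 M3 M4 M5 M6.
Proof.
by rewrite /L6 !scale0r !addr0 !add0r !scale1r.
Qed.

Ltac nrm := rewrite ?(mulrDr, mulrDl, mulrN, mulNr, scalerN, scaleNr, scalerDr, opprD, opprK, scalerA, mulrA);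
  rewrite -?(scalerAr, scalerAl); rewrite ?(mulrDr, mulrDl, mulrN, mulNr, scalerN, scaleNr, scalerDr, opprD, opprK, scalerA, mulrA).

Ltac lc6 t1 t2 t3 t4 t5 t6 :=
  let M1 := fresh "M" in let M2 := fresh "M" in let M3 := fresh "M" in
  let M4 := fresh "M" in let M5 := fresh "M" in let M6 := fresh "M" in
  set M1 := t1; set M2 := t2; set M3 := t3; set M4 := t4; set M5 := t5; set M6 := t6;
  clearbody M1 M2 M3 M4 M5 M6;
  pattern M1, M2, M3, M4, M5, M6; apply L6_all; cbv beta;
  repeat (rewrite ?L6N ?L6Z ?L6D);
  idtac.

Section Gen.
Variables (A : algType Qv).
Lemma Slem (x psi phi W : A) m :
  psi * x = v ^+ 2 *: (x * psi) + v *: W ->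
  phi * x = v ^- 2 *: (x * phi) - v^-1 *: W ->
  W * x = x * W ->
  (x ^+ m * (al m *: psi - be m *: phi) + ga m *: (x ^+ m.-1 * W)) * x
    + x ^+ m.+1 * (psi - phi)
  = x ^+ m.+1 * (al m.+1 *: psi - be m.+1 *: phi) + ga m.+1 *: (x ^+ m * W).
Proof.
move=> hpsi hphi hW.
rewrite mulrDl.
have -> : ga m *: (x ^+ m.-1 * W) * x = ga m *: (x ^+ m * W).
  case: m => [|m]; first by rewrite /ga /qint expr0 invr1 subrr mul0r mulr0 !scale0r mul0r.
  by rewrite /= -scalerAl -mulrA hW mulrA -exprSr.
rewrite -mulrA mulrBl -!scalerAl hpsi hphi.
nrm; rewrite -?exprSr.
set d := (0 : A).
lc6 (x ^+ m.+1 * psi) (x ^+ m.+1 * phi) (x ^+ m * W) d d d.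
congr (L6 _ _ _ _ _ _ _ _ _ _ _ _); rewrite ?al_rec ?be_rec ?ga_rec; ring.
Qed.

Lemma conjK (P M y : A) (w : Qv) : w != 0 -> P * M = 1 -> M * P = 1 ->
  P * y = w *: (y * P) -> M * y = w^-1 *: (y * M).
Proof.
move=> w0 hPM hMP h.
have h1 : y * P = w^-1 *: (P * y) by rewrite h scalerA mulVf // scale1r.
rewrite -[M * y]mulr1 -hPM !mulrA -(mulrA M y P) h1 -scalerAr -scalerAl.
by rewrite mulrA hMP mul1r.
Qed.

Lemma flipK (P y : A) (w : Qv) : w != 0 -> P * y = w *: (y * P) -> y * P = w^-1 *: (P * y).
Proof. by move=> w0 h; rewrite h scalerA mulVf // scale1r. Qed.

Lemma commK (P M y : A) : P * M = 1 -> M * P = 1 -> P * y = y * P -> M * y = y * M.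
Proof.
move=> hPM hMP h; have := @conjK P M y 1 (oner_neq0 _) hPM hMP.
by rewrite invr1 !scale1r; apply.
Qed.

Lemma invcomm (P M Q N : A) : P * M = 1 -> M * P = 1 -> Q * N = 1 -> N * Q = 1 ->
  P * Q = Q * P -> M * N = N * M.
Proof.
move=> hPM hMP hQN hNQ h.
have e1 : N * M * (P * Q) = 1 by rewrite mulrA -(mulrA N M P) hMP mulr1 hNQ.
have e2 : (Q * P) * (M * N) = 1 by rewrite mulrA -(mulrA Q P M) hPM mulr1 hQN.
by rewrite -[N * M]mulr1 -e2 -h mulrA e1 mul1r.
Qed.

Lemma D0 (B P M D : A) (c : Qv) : c != 0 -> P * M = 1 -> M * P = 1 ->
  B * D = - (v ^+ 2 *: (D * B)) ->
  B * B + B * B = c *: (P ^+ 2 - M ^+ 2) ->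
  P * D = v ^- 2 *: (D * P) -> M * D = v ^+ 2 *: (D * M) -> D = 0.
Proof.
move=> c0 hPM hMP hB hQ hP hM.
have hQD : (B * B + B * B) * D = v ^+ 2 * v ^+ 2 *: (D * (B * B + B * B)).
  rewrite mulrDl -!mulrA hB mulrN -scalerAr (mulrA B D B) hB.
  nrm; set d := (0 : A); lc6 (D * B * B) d d d d d.
  congr (L6 _ _ _ _ _ _ _ _ _ _ _ _); ring.
have hP2 : P ^+ 2 * D = v ^- 2 * v ^- 2 *: (D * P ^+ 2).
  rewrite !expr2 -(mulrA P P D) hP -scalerAr (mulrA P D P) hP; nrm.
  set d := (0 : A); lc6 (D * P * P) d d d d d; congr (L6 _ _ _ _ _ _ _ _ _ _ _ _); ring.
have hM2 : M ^+ 2 * D = v ^+ 2 * v ^+ 2 *: (D * M ^+ 2).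
  rewrite !expr2 -(mulrA M M D) hM -scalerAr (mulrA M D M) hM; nrm.
  set d := (0 : A); lc6 (D * M * M) d d d d d; congr (L6 _ _ _ _ _ _ _ _ _ _ _ _); ring.
move: hQD; rewrite hQ -scalerAl mulrBl hP2 hM2 -scalerAr mulrBr.
move=> h.
have h2 : (c * (v ^- 2 * v ^- 2 - v ^+ 2 * v ^+ 2)) *: (D * P ^+ 2) = 0.
  rewrite -(subrr (v ^+ 2 * v ^+ 2 *: (c *: (D * P ^+ 2 - D * M ^+ 2)))).
  rewrite -{1}h; nrm.
  set d := (0 : A); lc6 (D * P * P) (D * M * M) d d d d.
  congr (L6 _ _ _ _ _ _ _ _ _ _ _ _); ring.
move/eqP: h2; rewrite scaler_eq0 mulf_eq0 (negbTE c0) (negbTE v48Q) /= => /eqP h2.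
by rewrite -[D]mulr1 -hPM -[P]mulr1 -hPM !mulrA -(mulrA D P P) -expr2 h2 !mul0r.
Qed.
End Gen.

Lemma lft (A : algType Qv) (x y r : A) : x * y = r -> forall z, z * x * y = z * r.
Proof. by move=> h z; rewrite -mulrA h. Qed.

Lemma cQ_neq0 : 2 / (v ^+ 2 - v ^- 2) != 0.
Proof. apply: mulf_neq0; [exact: two_neq0 | rewrite invr_eq0; exact: v22Q]. Qed.

Ltac cring := first [ ring |
  match goal with h0 : ?X = 0 |- _ =>
    first [ (transitivity X; [ring | exact h0]) | (transitivity (- X); [ring | rewrite h0; exact: oppr0])
          | (transitivity (v * X); [ring | rewrite h0; exact: mulr0])
          | (transitivity (- (v * X)); [ring | rewrite h0 mulr0; exact: oppr0])
          | (transitivity (v^-1 * X); [ring | rewrite h0; exact: mulr0])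
          | (transitivity (- (v^-1 * X)); [ring | rewrite h0 mulr0; exact: oppr0]) ] end ].

Unset Implicit Arguments.

Theorem lemma5p1 (n i m : nat) (A : algType Qv)
  (Kp Km Kb E F Eb Fb : nat -> A) :
  qq_rels n Kp Km Kb E F Eb Fb ->
  (1 <= i <= n.-1)%N -> (1 <= m)%N ->
  [/\ Eb i * dpow (F i) m =
        dpow (F i) m * Eb i
        - v ^ (1 - m%:Z) *: (dpow (F i) (m%:Z - 1) * Kp i * Kb i.+1)
        + v ^ (m%:Z - 1) *: (dpow (F i) (m%:Z - 1) * Kb i * Kp i.+1)
        - dpow (F i) (m%:Z - 2) * Kp i * Kp i.+1 * Fb i,
      dpow (E i) m * Fb i =
        Fb i * dpow (E i) m
        + v ^ (m%:Z - 1) *: (dpow (E i) (m%:Z - 1) * Kb i * Km i.+1)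
        - v ^ (- m%:Z + 1) *: (dpow (E i) (m%:Z - 1) * Kb i.+1 * Km i)
        + dpow (E i) (m%:Z - 2) * Eb i * Km i.+1 * Km i &
      (i <= n.-2)%N ->
      Eb i * dpow (E i.+1) m =
        v ^ m%:Z *: (dpow (E i.+1) m * Eb i)
        + dpow (E i.+1) (m%:Z - 1) * (E i * Eb i.+1 - v *: (Eb i.+1 * E i))].
Proof.
move=> [Q1 [Q2 [Q3a [Q3b [Q3c [Q4 [Q5a [Q5b [Q5c [Q5d Q6]]]]]]]]]] hiN m1.
have hi : (1 <= i <= n)%N by move: hiN => /andP[] *; apply/andP; split; lia.
have hi1 : (1 <= i.+1 <= n)%N by move: hiN => /andP[] *; apply/andP; split; lia.
have hi2 : (2 <= i.+1 <= n)%N by move: hiN => /andP[] *; apply/andP; split; lia.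
have ep1 : epsal i i = 1 by rewrite /epsal eqxx (ltn_eqF (ltnSn i)).
have ep2 : epsal i.+1 i = -1 by rewrite /epsal eqxx (gtn_eqF (ltnSn i)).
have [PM MP _ PB BB] := Q1 i i hi hi.
have [_ _ PP1 PB1 _] := Q1 i i.+1 hi hi1.
have [_ _ _ P1B _] := Q1 i.+1 i hi1 hi.
have [P1M1 M1P1 _ P1B1 _] := Q1 i.+1 i.+1 hi1 hi1.
have [PE PEb PF PFb] := Q2 i i hi hiN.
have [P1E P1Eb P1F P1Fb] := Q2 i.+1 i hi1 hiN.
rewrite ep1 expr1z in PE PEb; rewrite ep1 exprN1 in PF PFb.
rewrite ep2 exprN1 in P1E P1Eb; rewrite ep2 opprK expr1z in P1F P1Fb.
rewrite eqxx in BB.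
have [BE BF BEb BFb] := Q3a i hiN.
have [B1E B1F B1Eb B1Fb] := Q3b i.+1 hi2.
have [EF EbFb EFb EbF] := Q4 i i hiN hiN.
rewrite eqxx in EF EbFb EFb EbF.
have [Eb2 Fb2] := Q5a i hiN.
rewrite /= in B1E B1F B1Eb B1Fb.
set f := F i in PF P1F BF EF EbF B1F B1Fb BFb Fb2 *.
set fb := Fb i in PFb P1Fb BF EbFb EFb B1F B1Fb BFb Fb2 *.
set e := E i in PE P1E BE BEb EF EFb B1E B1Eb Eb2 *.
set eb := Eb i in PEb P1Eb BE BEb EbFb EbF B1E B1Eb Eb2 *.
set P := Kp i in PM MP PB PP1 PB1 PE PEb PF PFb BB BF BFb EF EbFb EbF *.
set P1 := Kp i.+1 in PP1 P1B P1M1 M1P1 P1B1 P1E P1Eb P1F P1Fb EF EbFb EbF B1F B1Fb *.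
set M := Km i in PM MP BB BE BEb EF EbFb EFb *.
set M1 := Km i.+1 in P1M1 M1P1 EF EbFb EFb B1E B1Eb *.
set B := Kb i in PB P1B BB BE BF BEb BFb EbFb EFb EbF *.
set B1 := Kb i.+1 in PB1 P1B1 EbFb EFb EbF B1E B1F B1Eb B1Fb *.
set d := (0 : A).
have v0 := v_neq0.
set cc := (v - v^-1) / (v + v^-1).
have h0 : cc * (v + v^-1) - (v - v^-1) = 0 by rewrite cmul subrr.
have rBf : B * f = v *: (f * B) - fb * P by move/eqP: BF; rewrite subr_eq addrC => /eqP.
have rBfb : B * fb = f * P - v *: (fb * B) by rewrite -BFb addrK.
have hPD : P * (fb * f - f * fb) = v ^- 2 *: ((fb * f - f * fb) * P).
  nrm; rewrite ?PF ?PFb; nrm; rewrite ?(lft PF) ?(lft PFb); nrm.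
  lc6 (fb * f * P) (f * fb * P) d d d d.
  congr (L6 _ _ _ _ _ _ _ _ _ _ _ _); first [ring | vfield].
have cF : fb * f = f * fb.
  apply/eqP; rewrite -subr_eq0; apply/eqP.
  pose c := 2 / (v ^+ 2 - v ^- 2).
  apply: (D0 (B := B) (P := P) (M := M) (c := c)).
  - exact: cQ_neq0.
  - exact: PM.
  - exact: MP.
  - nrm; rewrite ?rBf ?rBfb; nrm.
    have rfb2 : fb * fb = cc *: (f * f) by rewrite -expr2 Fb2 expr2.
    do 5 (rewrite ?(lft rBf) ?(lft rBfb) ?(lft PF) ?(lft PFb) ?PF ?PFb ?(lft rfb2) ?rfb2; nrm).
    lc6 (f * f * P) (fb * f * B) (f * fb * B) d d d.
    congr (L6 _ _ _ _ _ _ _ _ _ _ _ _); first [ring | vfield].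
  - exact: BB.
  - exact: hPD.
  - rewrite -[v ^+ 2]invrK; apply: conjK hPD; [rewrite invr_eq0; exact: expf_neq0 | exact: PM | exact: MP].
have fbP : fb * P = v *: (P * fb) by rewrite (flipK (invr_neq0 v0) PFb) invrK.
have fbP1 : fb * P1 = v^-1 *: (P1 * fb) by rewrite (flipK v0 P1Fb).
have rB1f : B1 * f = v^-1 *: (f * B1) + v^-1 *: (P1 * fb).
  by rewrite -B1F scalerBr scalerA mulVf ?v0 // scale1r addrC subrK.
have P1P := esym PP1.
have hpsi : B * P1 * f = v ^+ 2 *: (f * (B * P1)) + v *: (- (P * P1 * fb)).
  do 5 (rewrite ?(lft P1F) ?(lft rBf) ?rBf ?(lft fbP) ?fbP ?(lft fbP1) ?fbP1 ?(lft P1P) ?P1P; nrm).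
  lc6 (f * B * P1) (P * P1 * fb) d d d d.
  congr (L6 _ _ _ _ _ _ _ _ _ _ _ _); first [ring | vfield].
have hphi : P * B1 * f = v ^- 2 *: (f * (P * B1)) - v^-1 *: (- (P * P1 * fb)).
  do 5 (rewrite ?(lft rB1f) ?(lft PF) ?PF; nrm).
  lc6 (f * P * B1) (P * P1 * fb) d d d d.
  congr (L6 _ _ _ _ _ _ _ _ _ _ _ _); first [ring | vfield].
have hW : - (P * P1 * fb) * f = f * - (P * P1 * fb).
  do 5 (rewrite ?(lft cF) ?(lft P1F) ?(lft PF) ?PF; nrm).
  lc6 (f * P * P1 * fb) d d d d d.
  congr (L6 _ _ _ _ _ _ _ _ _ _ _ _); first [ring | vfield].
have base1 : eb * f = f * eb + (B * P1 - P * B1).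
  by move/eqP: EbF; rewrite subr_eq addrC P1B -PB1 => /eqP.
have H1 : forall k, eb * f ^+ k.+1 = f ^+ k.+1 * eb +
   (f ^+ k * (al k *: (B * P1) - be k *: (P * B1)) + ga k *: (f ^+ k.-1 * - (P * P1 * fb))).
  elim=> [|k IH].
    rewrite /al /be /ga qint0 mulr0 scale0r addr0 expr0 !mul1r expr1 invr1 mul1r qint1 !scale1r.
    exact: base1.
  rewrite exprSr mulrA IH mulrDl -mulrA base1 mulrDr mulrA -exprSr -addrA.
  congr (_ + _); rewrite addrC; exact: (Slem _ hpsi hphi hW).
have ME : M * e = v^-1 *: (e * M) := conjK v0 PM MP PE.
have MEb : M * eb = v^-1 *: (eb * M) := conjK v0 PM MP PEb.
have M1E : M1 * e = v *: (e * M1).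
  by rewrite (conjK (invr_neq0 v0) P1M1 M1P1 P1E) invrK.
have M1Eb : M1 * eb = v *: (eb * M1).
  by rewrite (conjK (invr_neq0 v0) P1M1 M1P1 P1Eb) invrK.
have MB : M * B = B * M := commK PM MP PB.
have M1B : M1 * B = B * M1 := commK P1M1 M1P1 P1B.
have MB1 : M * B1 = B1 * M := commK PM MP PB1.
have M1B1 : M1 * B1 = B1 * M1 := commK P1M1 M1P1 P1B1.
have MM1 : M * M1 = M1 * M := invcomm PM MP P1M1 M1P1 PP1.
have rBe : B * e = v *: (e * B) + eb * M by rewrite -BE addrC subrK.
have rBeb : B * eb = e * M - v *: (eb * B) by rewrite -BEb addrK.
have rB1e : B1 * e = v^-1 *: (e * B1) - v^-1 *: (M1 * eb).
  have hB1e : v *: (B1 * e) = e * B1 - M1 * eb by move/eqP: B1E; rewrite subr_eq addrC => /eqP.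
  by rewrite -scalerBr -hB1e scalerA mulVf ?v0 // scale1r.
have hMD : M * (eb * e - e * eb) = v ^- 2 *: ((eb * e - e * eb) * M).
  do 3 (rewrite ?(lft ME) ?(lft MEb) ?ME ?MEb; nrm).
  lc6 (eb * e * M) (e * eb * M) d d d d.
  congr (L6 _ _ _ _ _ _ _ _ _ _ _ _); first [ring | vfield].
have cE : eb * e = e * eb.
  apply/eqP; rewrite -subr_eq0; apply/eqP.
  pose c := - (2 / (v ^+ 2 - v ^- 2)).
  apply: (D0 (B := B) (P := M) (M := P) (c := c)).
  - by rewrite oppr_eq0; exact: cQ_neq0.
  - exact: MP.
  - exact: PM.
  - have reb2 : eb * eb = - cc *: (e * e) by rewrite -expr2 Eb2 expr2.
    do 5 (rewrite ?(lft rBe) ?(lft rBeb) ?rBe ?rBeb ?(lft ME) ?(lft MEb) ?ME ?MEb ?(lft reb2) ?reb2; nrm).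
    lc6 (e * e * M) (eb * e * B) (e * eb * B) d d d.
    congr (L6 _ _ _ _ _ _ _ _ _ _ _ _); first [ring | vfield].
  - by rewrite BB /c scaleNr -scalerN opprB.
  - exact: hMD.
  - rewrite -[v ^+ 2]invrK; apply: conjK hMD; [rewrite invr_eq0; exact: expf_neq0 | exact: MP | exact: PM].
have M1M := esym MM1.
have hpsi2 : B * M1 * e = v ^+ 2 *: (e * (B * M1)) + v *: (eb * M1 * M).
  do 5 (rewrite ?(lft M1E) ?(lft rBe) ?rBe ?(lft MM1); nrm).
  lc6 (e * B * M1) (eb * M1 * M) d d d d.
  congr (L6 _ _ _ _ _ _ _ _ _ _ _ _); first [ring | vfield].
have hphi2 : B1 * M * e = v ^- 2 *: (e * (B1 * M)) - v^-1 *: (eb * M1 * M).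
  do 5 (rewrite ?(lft ME) ?rB1e ?(lft M1Eb) ?M1Eb; nrm).
  lc6 (e * B1 * M) (eb * M1 * M) d d d d.
  congr (L6 _ _ _ _ _ _ _ _ _ _ _ _); first [ring | vfield].
have hW2 : eb * M1 * M * e = e * (eb * M1 * M).
  do 5 (rewrite ?(lft ME) ?(lft M1E) ?cE; nrm).
  lc6 (e * eb * M1 * M) d d d d d.
  congr (L6 _ _ _ _ _ _ _ _ _ _ _ _); first [ring | vfield].
have base2 : e * fb = fb * e + (B * M1 - B1 * M).
  by move/eqP: EFb; rewrite subr_eq addrC M1B => /eqP.
have H2 : forall k, e ^+ k.+1 * fb = fb * e ^+ k.+1 +
   (e ^+ k * (al k *: (B * M1) - be k *: (B1 * M)) + ga k *: (e ^+ k.-1 * (eb * M1 * M))).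
  elim=> [|k IH].
    rewrite /al /be /ga qint0 mulr0 scale0r addr0 expr0 !mul1r expr1 invr1 mul1r qint1 !scale1r.
    exact: base2.
  rewrite exprSr -mulrA base2 mulrDr mulrA IH mulrDl -mulrA -exprSr -addrA.
  congr (_ + _); exact: (Slem _ hpsi2 hphi2 hW2).
case: m m1 => [//|k] _.
rewrite ia ib ic -exprnN -exprnP.
split.
- rewrite !dpowP -scalerAr H1.
  case: k H1 => [|j] H1.
  + rewrite id0 dpowN qfact0 qfact1 /al /be /ga qint0 qint1 !expr0 !expr1 invr1 !scale1r.
    nrm; rewrite ?mul1r ?mul0r ?scale0r ?subr0; lc6 (f * eb) (B * P1) (P * B1) d d d.
    congr (L6 _ _ _ _ _ _ _ _ _ _ _ _); ring.
  + rewrite id1 dpowP /al /be /ga !qfact_rec.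
    have ha := qint_neq0 j.+1; have hb := qint_neq0 j; have hc := qfact_neq0 j.
    have hw := expf_neq0 j.+1 v0.
    move: (qint j.+2) (qint j.+1) (qfact j) (v ^+ j.+1) ha hb hc hw => a b c w ha hb hc hw.
    nrm.
    lc6 (f ^+ j.+2 * eb) (f ^+ j.+1 * B * P1) (f ^+ j.+1 * P * B1) (f ^+ j * P * P1 * fb) d d.
    congr (L6 _ _ _ _ _ _ _ _ _ _ _ _); revert a b c w ha hb hc hw; gf.
- rewrite !dpowP -scalerAl H2.
  case: k H1 H2 => [|j] H1 H2.
  + rewrite id0 dpowN qfact0 qfact1 /al /be /ga qint0 qint1 !expr0 !expr1 invr1 !scale1r.
    nrm; rewrite ?mul1r ?mulr1 ?mul0r ?scale0r ?addr0; lc6 (fb * e) (B * M1) (B1 * M) d d d.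
    congr (L6 _ _ _ _ _ _ _ _ _ _ _ _); ring.
  + rewrite id1 dpowP /al /be /ga !qfact_rec.
    have ha := qint_neq0 j.+1; have hb := qint_neq0 j; have hc := qfact_neq0 j.
    have hw := expf_neq0 j.+1 v0.
    move: (qint j.+2) (qint j.+1) (qfact j) (v ^+ j.+1) ha hb hc hw => a b c w ha hb hc hw.
    rewrite -[fb * (_ *: e ^+ j.+2)]scalerAr.
    move: (fb * e ^+ j.+2) => X.
    nrm.
    lc6 X (e ^+ j.+1 * B * M1) (e ^+ j.+1 * B1 * M) (e ^+ j * eb * M1 * M) d d.
    congr (L6 _ _ _ _ _ _ _ _ _ _ _ _); revert a b c w ha hb hc hw; gf.
- move=> hn2; rewrite -exprnP.
  have hi1' : (1 <= i.+1 <= n.-1)%N by move: hiN => /andP[] *; apply/andP; split; lia.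
  have i1 : (1 <= i)%N by case/andP: hiN.
  have hle : (i.+1 <= n.-1)%N by lia.
  have [_ EEb _ _] := Q5d i i1 hle.
  have [S _] := Q6 i.+1 i hi1' hiN (introT orP (or_introl (eqxx _))).
  have serre := S (Eb i) (or_intror erefl).
  rewrite -/eb in EEb serre.
  set e1 := E i.+1 in EEb serre *.
  set eb1 := Eb i.+1 in EEb *.
  set Z := e * eb1 - v *: (eb1 * e) in EEb *.
  have rZ : eb * e1 = v *: (e1 * eb) + Z by rewrite EEb addrC subrK.
  have ZE : Z * e1 = v^-1 *: (e1 * Z).
    rewrite EEb; apply/eqP; rewrite -subr_eq0; apply/eqP; rewrite -[RHS]serre !expr2.
    nrm; lc6 (eb * e1 * e1) (e1 * eb * e1) (e1 * e1 * eb) d d d.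
    congr (L6 _ _ _ _ _ _ _ _ _ _ _ _); first [ring | vfield].
  clearbody Z.
  have H3 : forall k, eb * e1 ^+ k.+1 = v ^+ k.+1 *: (e1 ^+ k.+1 * eb) + qint k.+1 *: (e1 ^+ k * Z).
    elim=> [|l IH]; first by rewrite expr1 expr0 mul1r qint1 scale1r expr1.
    rewrite exprSr mulrA IH qint_rec3 (exprS v l.+1).
    move: (v ^+ l.+1) (qint l.+1) => w a.
    nrm; rewrite ?(lft rZ) ?(lft ZE); nrm; rewrite -!exprSr.
    lc6 (e1 ^+ l.+2 * eb) (e1 ^+ l.+1 * Z) d d d d.
    congr (L6 _ _ _ _ _ _ _ _ _ _ _ _); ring.
  rewrite !dpowP -scalerAr H3 qfact_rec.
  have ha := qint_neq0 k; have hc := qfact_neq0 k.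
  have hw := expf_neq0 k.+1 v0.
  move: (qint k.+1) (qfact k) (v ^+ k.+1) ha hc hw => a c w ha hc hw.
  nrm.
  lc6 (e1 ^+ k.+1 * eb) (e1 ^+ k * Z) d d d d.
  congr (L6 _ _ _ _ _ _ _ _ _ _ _ _); revert a c w ha hc hw; gf.
Qed.
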